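(* Let $n=1$ and $k \in \{1,2\}$. Then $\mathcal{H}_{p,\beta, \frac{k}{3}, 0 }^{(l)}$ is spectrally similar to $\Delta^{(l-1)}_{p}$ with the functions \[ \phi_{p,\beta,\frac{k}{3},0}(z)=\frac{4 p \left(p - 1\right)}{4 p^{2} - \left( \beta + 2 z\right)^{2}} , \quad \quad \psi_{p,\beta, \frac{k}{3},0 }(z) = - \frac{\beta^{2} + 2 \beta p + \beta z - 2 p z - 2 p - 2 z^{2} + 2}{\beta + 2 p + 2 z}. \] The spectral decimation function $R_{p,\beta,\frac{k}{3},0 }$ and the exceptional set $\mathscr{E}_{p,\beta, \frac{k}{3},0}$ are given by \[ R_{p,\beta,\frac{k}{3},0 }(z) = \frac{\left( - \beta + 2 p - 2 z \right) \left(\beta^{2} + 2 \beta p + \beta z - 2 p z - 2 p - 2 z^{2} + 2\right)}{4 p \left(1-p\right)} , \quad \quad \mathscr{E}_{p,\beta, \frac{k}{3},0} = \left\{ - \frac{\beta}{2} - p, \ - \frac{\beta}{2} + p \right\}. \]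
   Context: Fix $p\in(0,1)$, $\beta\in\mathbb{R}$, $l\ge 1$. For $x\in\mathbb{Z}_+\setminus\{0\}$ let $m(x)$ be the largest $m$ with $3^m\mid x$, and set $p(x,x-1)=1-p$, $p(x,x+1)=p$ if $3^{-m(x)}x\equiv 1 \pmod 3$, and $p(x,x-1)=p$, $p(x,x+1)=1-p$ if $3^{-m(x)}x\equiv 2 \pmod 3$. On $V_l=\{0,1,\dots,3^l\}$ the level-$l$ self-similar almost Mathieu operator $\mathcal{H}^{(l)}_{p,\beta,\alpha,\theta}$ acts by $(\mathcal{H}^{(l)}f)(0)=\beta\cos(\theta)f(0)-f(1)$, $(\mathcal{H}^{(l)}f)(3^l)=\beta\cos(2\pi\alpha 3^l+\theta)f(3^l)-f(3^l-1)$, and for $0<x<3^l$, $(\mathcal{H}^{(l)}f)(x)=\beta\cos(2\pi\alpha x+\theta)f(x)-p(x,x-1)f(x-1)-p(x,x+1)f(x+1)$. The level-$l$ Laplacian $\Delta^{(l)}_p$ on $V_l$ is given by $(\Delta^{(l)}_pf)(0)=f(0)-f(1)$, $(\Delta^{(l)}_pf)(3^l)=f(3^l)-f(3^l-1)$, and $(\Delta^{(l)}_pf)(x)=f(x)-p(x,x-1)f(x-1)-p(x,x+1)f(x+1)$ for $0<x<3^l$. Here $\theta=0$, $\alpha=k/3$. Decompose $\mathcal{H}^{(l)}$ in block form $\begin{pmatrix}T & J^T\\ J & X\end{pmatrix}$ with respect to $\mathrm{span}\{\delta_v: v\equiv 0 \bmod 3\}\oplus\mathrm{span}\{\delta_v: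 v\not\equiv 0\bmod 3\}$. Spectral similarity of $\mathcal{H}^{(l)}$ to $\Delta^{(l-1)}_p$ (identified on the vertices $\equiv 0 \bmod 3$) with functions $\phi,\psi$ means that the Schur complement satisfies $T-z-J^T(X-z)^{-1}J=\phi(z)\Delta^{(l-1)}_p-\psi(z)I$ (equivalently $U^*(\mathcal{H}^{(l)}-z)^{-1}U=(\phi(z)\Delta^{(l-1)}_p-\psi(z))^{-1}$); the spectral decimation function is $R=\psi/\phi$ and the exceptional set is $\{z: z\in\sigma(X)\text{ or }\phi(z)=0\}$. *)

(* Defs.v *)
From HB Require Import structures.
From mathcomp Require Import all_boot all_order all_algebra.
From mathcomp Require Import all_classical all_reals all_analysis.
From mathcomp Require Import complex.
Set Implicit Arguments. Unset Strict Implicit. Unset Printing Implicit Defensive.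
Import Order.TTheory GRing.Theory Num.Theory.
Local Open Scope ring_scope.
Local Open Scope complex_scope.

Definition red3 (x : nat) : nat := x %/ 3 ^ logn 3 x.

Definition pdown {R : realType} (p : R) (x : nat) : R :=
  if (red3 x %% 3 == 1)%N then 1 - p else p.
Definition pup {R : realType} (p : R) (x : nat) : R :=
  if (red3 x %% 3 == 1)%N then p else 1 - p.

(* entry (x,y) of an operator on V_l = {0,...,N}, N = 3^l, of the form
   (Af)(x) = d(x) f(x) - [boundary / p(x,x+-1)-weighted neighbours] *)
Definition walk_ent {R : realType} (N : nat) (p : R) (d : nat -> R)
  (x y : nat) : R :=
  if x == y then d x
  else if x == 0%N then (if y == 1%N then -1 else 0)
  else if x == N then (if y == N.-1 then -1 else 0)
  else if y == x.-1 then - pdown p x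
  else if y == x.+1 then - pup p x
  else 0.

Definition Hmat {R : realType} (l : nat) (p beta alpha theta : R)
  : 'M[R]_((3 ^ l).+1) :=
  \matrix_(i, j) walk_ent (3 ^ l) p
     (fun x => beta * cos (2 * pi * alpha * x%:R + theta)) i j.

Definition Lapmat {R : realType} (l : nat) (p : R) : 'M[R]_((3 ^ l).+1) :=
  \matrix_(i, j) walk_ent (3 ^ l) p (fun _ => 1) i j.

Definition cplx {R : realType} {m n : nat} (A : 'M[R]_(m, n)) : 'M[R[i]]_(m, n) :=
  map_mx (fun x => x%:C) A.

(* index maps: vertices = 0 mod 3 (i |-> 3 i, i <= 3^(l-1)) and
   vertices <> 0 mod 3 (j |-> 3 (j/2) + 1 + (j mod 2), j < 2 * 3^(l-1)) *)
Definition vmult (l : nat) (i : 'I_((3 ^ l.-1).+1)) : 'I_((3 ^ l).+1) :=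
  inord (3 * i).
Definition vnon (l : nat) (j : 'I_(2 * 3 ^ l.-1)) : 'I_((3 ^ l).+1) :=
  inord (3 * (j %/ 2) + 1 + (j %% 2)).

(* block decomposition  H = [[T, B], [J, X]]  (B is the block written J^T
   in the paper) *)
Definition blkT {R : realType} l (H : 'M[R]_((3 ^ l).+1)) :=
  mxsub (@vmult l) (@vmult l) H.
Definition blkB {R : realType} l (H : 'M[R]_((3 ^ l).+1)) :=
  mxsub (@vmult l) (@vnon l) H.
Definition blkJ {R : realType} l (H : 'M[R]_((3 ^ l).+1)) :=
  mxsub (@vnon l) (@vmult l) H.
Definition blkX {R : realType} l (H : 'M[R]_((3 ^ l).+1)) :=
  mxsub (@vnon l) (@vnon l) H.

Definition schur {R : realType} l (H : 'M[R]_((3 ^ l).+1)) (z : R[i])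
  : 'M[R[i]]_((3 ^ l.-1).+1) :=
  cplx (blkT H) - z%:M
  - cplx (blkB H) *m invmx (cplx (blkX H) - z%:M) *m cplx (blkJ H).

Definition spectrally_similar_with {R : realType} l (H : 'M[R]_((3 ^ l).+1))
  (p : R) (phi psi : R[i] -> R[i]) (E : R[i] -> Prop) : Prop :=
  forall z, ~ E z ->
    schur H z = phi z *: cplx (Lapmat l.-1 p) - (psi z)%:M.

Definition exceptional {R : realType} l (H : 'M[R]_((3 ^ l).+1))
  (phi : R[i] -> R[i]) (z : R[i]) : Prop :=
  eigenvalue (cplx (blkX H)) z \/ phi z = 0.

Definition phi13 {R : realType} (p beta : R) (z : R[i]) : R[i] :=
  4 * p%:C * (p%:C - 1) / (4 * p%:C ^+ 2 - (beta%:C + 2 * z) ^+ 2).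
Definition psi13 {R : realType} (p beta : R) (z : R[i]) : R[i] :=
  - ((beta%:C ^+ 2 + 2 * beta%:C * p%:C + beta%:C * z - 2 * p%:C * z
      - 2 * p%:C - 2 * z ^+ 2 + 2) / (beta%:C + 2 * p%:C + 2 * z)).
Definition R13 {R : realType} (p beta : R) (z : R[i]) : R[i] :=
  (- beta%:C + 2 * p%:C - 2 * z)
  * (beta%:C ^+ 2 + 2 * beta%:C * p%:C + beta%:C * z - 2 * p%:C * z
     - 2 * p%:C - 2 * z ^+ 2 + 2)
  / (4 * p%:C * (1 - p%:C)).

(* Main.v *)
Require Import Defs.
From HB Require Import structures.
From mathcomp Require Import all_boot all_order all_algebra.
From mathcomp Require Import all_classical all_reals all_analysis complex.
From mathcomp Require Import zify ring lra.
Set Implicit Arguments. Unset Strict Implicit. Unset Printing Implicit Defensive.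
Import Order.TTheory GRing.Theory Num.Theory.
Local Open Scope ring_scope.

Ltac dec := repeat match goal with
 | |- context [if ?b then _ else _] =>
    lazymatch b with context [if _ then _ else _] => fail | _ => idtac end;
    first [ rewrite (_ : b = true); last by (apply/idP; lia)
          | rewrite (_ : b = false); last by (apply/negbTE; lia)
          | case: (boolP b) => ? ]
 end.

Ltac csimp := rewrite ?(rmorphN, rmorphB, rmorph1, rmorph0, rmorphD, rmorphM, fmorph_div, fmorphV, rmorph_nat).

Lemma ord_eqE m (i j : 'I_m) : (i == j) = (nat_of_ord i == nat_of_ord j).
Proof. by []. Qed.

Section Sums.
Variable C : nzRingType.
Lemma sum_if m (a : nat) (b : bool) (g : nat -> C) :
  \sum_(k < m) (if b && ((k : nat) == a) then g k else 0) = if b && (a < m)%N then g a else 0.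
Proof.
case: b => /=; last by rewrite big1.
case: (ltnP a m) => h.
- rewrite (bigD1 (Ordinal h)) //= eqxx big1 ?addr0 // => k /negbTE.
  by rewrite -val_eqE /= => ->.
- rewrite big1 // => k _; case: eqP => // e; move: (ltn_ord k); by rewrite e ltnNge h.
Qed.
Lemma sum_ifc m (a : nat) (b : bool) (c : C) :
  \sum_(k < m) (if b && ((k : nat) == a) then c else 0) = if b && (a < m)%N then c else 0.
Proof. exact: (sum_if m a b (fun _ => c)). Qed.
Lemma sum_ifM m (a : nat) (b : bool) c (g : nat -> C) :
  \sum_(k < m) (if b && ((k : nat) == a) then c else 0) * g k = if b && (a < m)%N then c * g a else 0.
Proof.
rewrite -(sum_if m a b (fun k => c * g k)); apply: eq_bigr => k _; case: ifP => [/andP[_ /eqP->]|]; by rewrite ?mul0r.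
Qed.
Lemma sum_Mif m (a : nat) (b : bool) c (g : nat -> C) :
  \sum_(k < m) g k * (if b && ((k : nat) == a) then c else 0) = if b && (a < m)%N then g a * c else 0.
Proof.
rewrite -(sum_if m a b (fun k => g k * c)); apply: eq_bigr => k _; case: ifP => [/andP[_ /eqP->]|]; by rewrite ?mulr0.
Qed.
Lemma sum_ifM1 m (a : nat) c (g : nat -> C) :
  \sum_(k < m) (if ((k : nat) == a) then c else 0) * g k = if (a < m)%N then c * g a else 0.
Proof. exact: (sum_ifM m a true c g). Qed.
Lemma sum_Mif1 m (a : nat) c (g : nat -> C) :
  \sum_(k < m) g k * (if ((k : nat) == a) then c else 0) = if (a < m)%N then g a * c else 0.
Proof. exact: (sum_Mif m a true c g). Qed.
End Sums.

Section Generic.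
Variable C : fieldType.
Variables (n : nat) (P Bt z : C) (u : nat -> C).
Hypothesis n_gt0 : (0 < n)%N.
Definition gQ := 1 - P.
Definition gw := -(Bt/2) - z.
Definition gD := gw^+2 - P^+2.
Hypothesis D0 : gD != 0.
Definition glam i := if i == 0%N then 1 else u i.
Definition grho i := if i == n then 1 else 1 - u i.
Definition Yf (a b : nat) : C :=
  if a == b then gw / gD else if (a %/ 2 == b %/ 2)%N then P / gD else 0.
Definition Ym : 'M[C]_(2 * n) := \matrix_(j, j') Yf j j'.
Definition partner (j : nat) := if (j %% 2 == 0)%N then j.+1 else j.-1.

Variable Xc : 'M[C]_(2 * n).
Hypothesis hX : forall j j' : 'I_(2 * n),
  Xc j j' = if (j == j' :> nat) then -(Bt/2) else if (j %/ 2 == j' %/ 2)%N then -P else 0.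

Lemma AY : (Xc - z%:M) *m Ym = 1%:M.
Proof.
apply/matrixP => j j''; rewrite !mxE.
have hj := ltn_ord j; have hj'' := ltn_ord j''.
under eq_bigr => k _ do rewrite !mxE hX.
rewrite (eq_bigr (fun k : 'I_(2 * n) => (if true && (k == j :> nat) then gw * Yf j j'' else 0)
   + (if true && (k == partner j :> nat) then -P * Yf (partner j) j'' else 0))); last first.
  move=> k _; have hk := ltn_ord k.
  rewrite /Yf /partner !ord_eqE !mulrb /gw; dec; ring.
rewrite big_split !(sum_ifc _ _ true) /= /Yf /partner !ord_eqE !mulrb; dec; try ring.
all: rewrite /gD; field; exact: D0.
Qed.

Lemma invA : invmx (Xc - z%:M) = Ym.
Proof.
have [Au _] := mulmx1_unit AY.
by rewrite -[invmx _]mulmx1 -AY mulmxA mulVmx // mul1mx.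
Qed.

Lemma A_unit : Xc - z%:M \in unitmx.
Proof. by have [Au _] := mulmx1_unit AY. Qed.


Lemma not_eig : ~~ eigenvalue Xc z.
Proof.
apply/eigenvalueP => -[v hv vn0]; move/eqP: vn0; apply.
have h0 : v *m (Xc - z%:M) = 0 by rewrite mulmxBr hv mul_mx_scalar subrr.
by rewrite -[v]mulmx1 -AY mulmxA h0 mul0mx.
Qed.

Variables (Tc Lc : 'M[C]_n.+1) (Bc : 'M[C]_(n.+1, 2 * n)) (Jc : 'M[C]_(2 * n, n.+1)).
Hypothesis hT : forall i i' : 'I_n.+1, Tc i i' = if (i == i' :> nat) then Bt else 0.
Hypothesis hB : forall (i : 'I_n.+1) (j : 'I_(2 * n)), Bc i j =
  (if (j == (2 * i)%N :> nat) then -glam i else 0) + (if (0 < i)%N && (j == (2 * i).-1%N :> nat) then -grho i else 0).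
Hypothesis hJ : forall (j : 'I_(2 * n)) (i : 'I_n.+1), Jc j i =
  (if (j == (2 * i)%N :> nat) then -gQ else 0) + (if (0 < i)%N && (j == (2 * i).-1%N :> nat) then -gQ else 0).
Hypothesis hL : forall i i' : 'I_n.+1, Lc i i' = if (i == i' :> nat) then 1
  else if (i' == i.+1 :> nat)%N then -glam i else if (i'.+1 == i :> nat)%N then -grho i else 0.

Definition gphi := P * gQ / gD.
Definition gpsi := gphi - Bt + z + gQ * gw / gD.

Lemma schur_gen : Tc - z%:M - Bc *m invmx (Xc - z%:M) *m Jc = gphi *: Lc - gpsi%:M.
Proof.
rewrite invA; apply/matrixP => i i'.
have BY : forall j' : 'I_(2 * n), (Bc *m Ym) i j' =
   (if (2 * i < 2 * n)%N then -glam i * Yf (2 * i)%N j' else 0)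
 + (if (0<i)%N && ((2 * i).-1 < 2 * n)%N then -grho i * Yf (2 * i)%N.-1 j' else 0).
  move=> j'; rewrite mxE.
  under eq_bigr => j _ do rewrite hB mxE mulrDl.
  by rewrite big_split /= (sum_ifM1 _ _ _ (fun k => Yf k j')) (sum_ifM _ _ _ _ (fun k => Yf k j')).
rewrite !mxE.
under eq_bigr => j _ do rewrite BY hJ mulrDr.
set G := fun k : nat => (if (2 * i < 2 * n)%N then -glam i * Yf (2 * i)%N k else 0)
 + (if (0<i)%N && ((2 * i).-1 < 2 * n)%N then -grho i * Yf (2 * i)%N.-1 k else 0).
rewrite big_split /= (sum_Mif1 _ _ _ G) (sum_Mif _ _ _ _ G) /G.
have hi := ltn_ord i; have hi' := ltn_ord i'.
rewrite hT hL /Yf /glam /grho /gpsi /gphi /gQ /gw !ord_eqE !mulrb; dec; ring.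
Qed.
End Generic.

Section Trig.
Variable R : realType.

Lemma alg_c (c s : R) : 0 < c -> s ^+ 2 = 1 - c ^+ 2 ->
  -1 = c * (c ^+ 2 *+ 2 - 1) - s * (c * s *+ 2) -> c = 1 / 2.
Proof.
move=> cpos s2 e.
have e2 : (c + 1) * (2 * c - 1) ^+ 2 = 0.
  have -> : (c + 1) * (2 * c - 1) ^+ 2 = (c * (c ^+ 2 *+ 2 - 1) - s ^+ 2 * c *+ 2) + 1.
    rewrite s2; ring.
  have -> : s ^+ 2 * c *+ 2 = s * (c * s *+ 2) by ring.
  rewrite -e; ring.
move/eqP: e2; rewrite mulf_eq0 expf_eq0 /= => /orP[/eqP h|/eqP h]; first lra.
lra.
Qed.

Lemma cos_pi3 : cos (pi / 3) = 1 / 2 :> R.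
Proof.
apply: (@alg_c _ (sin (pi / 3))).
- apply: cos_gt0_pihalf; have := pi_gt0 R; move=> h; apply/andP; split; lra.
- exact: sin2cos2.
- rewrite -cos_mulr2n -sin_mulr2n -cosD -cospi; congr cos; field; try done.
Qed.

Lemma cos_2pi3 : cos (2 * pi / 3) = - (1 / 2) :> R.
Proof.
have -> : 2 * pi / 3 = (pi / 3) *+ 2 :> R by field; try done.
rewrite cos_mulr2n cos_pi3; field; try done.
Qed.

Lemma cos_k3 (k x : nat) : (k = 1 \/ k = 2)%N ->
  cos (2 * pi * (k%:R / 3) * x%:R + 0) = if (x %% 3 == 0)%N then 1 else - (1/2) :> R.
Proof.
move=> hk; rewrite addr0.
have [q [r [-> hr]]] : exists q r, x = (3 * q + r)%N /\ (r < 3)%N.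
  by exists (x %/ 3)%N, (x %% 3)%N; rewrite mulnC -divn_eq ltn_mod.
have -> : 2 * pi * (k%:R / 3) * (3 * q + r)%N%:R = (2 * pi / 3) * (k * r)%N%:R + (pi *+ 2) *+ (k * q) :> R.
  rewrite !natrD !natrM; field; try done.
rewrite periodicn; last exact: cosD2pi.
have -> : ((3 * q + r) %% 3 = r)%N by lia.
case: hk => ->; move: hr; case: r => [|[|[|]]] //= _;
  rewrite ?mulr0 ?cos0 ?mulr1 ?cos_2pi3 //.
- have -> : 2 * pi / 3 * 2%:R = - (2 * pi / 3) + pi *+ 2 :> R by field.
  by rewrite cosD2pi cosN cos_2pi3.
- have -> : 2 * pi / 3 * 2%:R = - (2 * pi / 3) + pi *+ 2 :> R by field.
  by rewrite cosD2pi cosN cos_2pi3.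
- have -> : 2 * pi / 3 * 4%:R = (2 * pi / 3) + pi *+ 2 :> R by field.
  by rewrite cosD2pi cos_2pi3.
Qed.
End Trig.

Local Open Scope complex_scope.
Section Inst.
Variable R : realType.
Variables (p beta : R).

Lemma pdownE x : pdown p x = 1 - pup p x.
Proof. by rewrite /pdown /pup; case: ifP => _ //; rewrite opprB addrC subrK. Qed.

Lemma red3_3 x : (0 < x)%N -> red3 (3 * x) = red3 x.
Proof.
move=> h; rewrite /red3 lognM // (logn_prime 3 (isT : prime 3)) eqxx /= add1n expnS divnMl //.
Qed.

Lemma red3_nd x : ~~ (3 %| x)%N -> red3 x = x.
Proof. by move=> h; rewrite /red3 lognE (negbTE h) !andbF expn0 divn1. Qed.

Lemma pup3 x : pup p (3 * x) = if x == 0%N then pup p 0 else pup p x.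
Proof. case: (posnP x) => [->|h] //; by rewrite /pup red3_3. Qed.

Lemma pup_vn j : pup p (3 * (j %/ 2) + 1 + j %% 2) = if (j %% 2 == 0)%N then p else 1 - p.
Proof. rewrite /pup red3_nd; last by lia. dec => //. Qed.


Variable k : nat.
Hypothesis hk : (k = 1 \/ k = 2)%N.
Definition dd x := if (x %% 3 == 0)%N then beta else -(beta/2).

Lemma walk_ext N d d' x y : d x = d' x -> walk_ent N p d x y = walk_ent N p d' x y.
Proof. by rewrite /walk_ent => ->. Qed.

Lemma Hent l (i j : 'I_(3^l).+1) : Hmat l p beta (k%:R/3) 0 i j = walk_ent (3^l) p dd i j.
Proof.
rewrite mxE; apply: walk_ext; rewrite cos_k3 // /dd; case: ifP => _; ring.
Qed.

Lemma Hwalk N x y : walk_ent N p (fun x : nat => beta * cos (2 * pi * (k%:R / 3) * x%:R + 0)) x y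
  = walk_ent N p dd x y.
Proof. apply: walk_ext; rewrite cos_k3 // /dd; case: ifP => _; ring. Qed.

Lemma vmultE l' (i : 'I_(3^l').+1) : (@vmult l'.+1 i : nat) = (3 * i)%N.
Proof. rewrite /vmult inordK //; case: i => x hx /=; rewrite expnS; move: hx; rewrite /=; move=> hx; lia. Qed.

Lemma vnonE l' (j : 'I_(2 * 3^l')) : (@vnon l'.+1 j : nat) = (3 * (j %/ 2) + 1 + j %% 2)%N.
Proof. rewrite /vnon inordK //; case: j => x hx /=; rewrite expnS; move: hx; rewrite /=; move=> hx; lia. Qed.


Variable l' : nat.
Let H := Hmat l'.+1 p beta (k%:R/3) 0.

Lemma entX (j j' : 'I_(2 * 3^l')) : cplx (blkX H) j j' =
  if j == j' :> nat then -(beta%:C/2) else if (j %/ 2 == j' %/ 2)%N then -(p%:C) else 0.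
Proof.
rewrite !mxE Hwalk !vnonE expnS /walk_ent /dd !pdownE !pup_vn.
have := ltn_ord j; have := ltn_ord j' => hj hj'.
dec; csimp; ring.
Qed.


Let u := fun x => (pup p x)%:C.

Lemma entT (i i' : 'I_(3^l').+1) : cplx (blkT H) i i' = if i == i' :> nat then beta%:C else 0.
Proof.
rewrite !mxE Hwalk !vmultE expnS /walk_ent /dd !pdownE.
have := ltn_ord i; have := ltn_ord i' => hi hi'.
dec; csimp; ring.
Qed.

Lemma entB (i : 'I_(3^l').+1) (j : 'I_(2 * 3^l')) : cplx (blkB H) i j =
  (if j == (2 * i)%N :> nat then - glam u i else 0) +
  (if (0 < i)%N && (j == (2 * i).-1 :> nat) then - grho (3^l') u i else 0).
Proof.
rewrite !mxE Hwalk vmultE vnonE expnS /walk_ent /dd !pdownE pup3 /glam /grho /u /=.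
have := ltn_ord i; have := ltn_ord j => hi hj.
dec; csimp; ring.
Qed.

Lemma entJ (j : 'I_(2 * 3^l')) (i : 'I_(3^l').+1) : cplx (blkJ H) j i =
  (if j == (2 * i)%N :> nat then - gQ p%:C else 0) +
  (if (0 < i)%N && (j == (2 * i).-1 :> nat) then - gQ p%:C else 0).
Proof.
rewrite !mxE Hwalk vmultE vnonE expnS /walk_ent /dd !pdownE pup_vn /gQ.
have := ltn_ord i; have := ltn_ord j => hi hj.
dec; csimp; ring.
Qed.

Lemma entL (i i' : 'I_(3^l').+1) : cplx (Lapmat l' p) i i' =
  if i == i' :> nat then 1 else if i' == i.+1 :> nat then - glam u i
  else if i'.+1 == i :> nat then - grho (3^l') u i else 0.
Proof.
rewrite !mxE /walk_ent !pdownE /glam /grho /u /=.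
have := ltn_ord i; have := ltn_ord i' => hi hi'.
dec; csimp; ring.
Qed.

End Inst.

Lemma key_ids (F : numFieldType) (a b Bt P z : F) :
  P = (a - b) / 4 -> z = (a + b) / 4 - Bt / 2 ->
  a != 0 -> b != 0 -> a - b != 0 -> 4 - (a - b) != 0 ->
  [/\ P * (1 - P) / ((-(Bt/2) - z)^+2 - P^+2) = 4 * P * (P - 1) / (4 * P ^+ 2 - (Bt + 2 * z) ^+ 2),
      P * (1 - P) / ((-(Bt/2) - z)^+2 - P^+2) - Bt + z + (1 - P) * (-(Bt/2) - z) / ((-(Bt/2) - z)^+2 - P^+2)
      = - ((Bt ^+ 2 + 2 * Bt * P + Bt * z - 2 * P * z
      - 2 * P - 2 * z ^+ 2 + 2) / (Bt + 2 * P + 2 * z)) &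
    - ((Bt ^+ 2 + 2 * Bt * P + Bt * z - 2 * P * z
      - 2 * P - 2 * z ^+ 2 + 2) / (Bt + 2 * P + 2 * z)) /
    (4 * P * (P - 1) / (4 * P ^+ 2 - (Bt + 2 * z) ^+ 2)) =
    (- Bt + 2 * P - 2 * z)
  * (Bt ^+ 2 + 2 * Bt * P + Bt * z - 2 * P * z
     - 2 * P - 2 * z ^+ 2 + 2)
  / (4 * P * (1 - P))].
Proof.
move=> eP ez da db dab d4.
have e1 : (-(Bt/2) - z)^+2 - P^+2 = a * b / 4 by rewrite eP ez; field.
have e2 : 4 * P ^+ 2 - (Bt + 2 * z) ^+ 2 = - (a * b) by rewrite eP ez; field.
have e3 : Bt + 2 * P + 2 * z = a by rewrite eP ez; field.
have e4 : 4 * P * (P - 1) = - ((a - b) * (4 - (a - b))) / 4 by rewrite eP; field.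
have e5 : 4 * P * (1 - P) = ((a - b) * (4 - (a - b))) / 4 by rewrite eP; field.
rewrite e1 e2 e3 e4 e5 {e1 e2 e3 e4 e5} eP ez.
split; field; by rewrite ?da ?db ?dab ?d4.
Qed.

Theorem lemma3p7 (R : realType) (l k : nat) (p beta : R) :
  (1 <= l)%N -> (k = 1 \/ k = 2)%N -> 0 < p < 1 ->
  let H := Hmat l p beta (k%:R / 3) 0 in
  let E := exceptional H (phi13 p beta) in
  spectrally_similar_with H p (phi13 p beta) (psi13 p beta) E
  /\ (forall z : R[i], ~ E z -> psi13 p beta z / phi13 p beta z = R13 p beta z)
  /\ (forall z : R[i], E z <->
        (z = - (beta%:C / 2) - p%:C \/ z = - (beta%:C / 2) + p%:C)).
Proof.
move=> hl hk /andP[p0 p1].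
case: l hl => [//|l'] _ H E.
have P0 : p%:C != 0 :> R[i] by rewrite fmorph_eq0 gt_eqF.
have P1 : 1 - p%:C != 0 :> R[i].
  have : (1 - p)%:C != 0 :> R[i] by rewrite fmorph_eq0 subr_eq0 gt_eqF.
  by csimp.
have n_gt0 : (0 < 3 ^ l')%N by rewrite expn_gt0.
have Dkey : forall z : R[i], gD p%:C beta%:C z = 0 <->
    (z = - (beta%:C / 2) - p%:C \/ z = - (beta%:C / 2) + p%:C).
  move=> z.
  have -> : gD p%:C beta%:C z = ((-(beta%:C/2) - p%:C) - z) * ((-(beta%:C/2) + p%:C) - z).
    rewrite /gD /gw; ring.
  split.
  - by move/eqP; rewrite mulf_eq0 !subr_eq0 => /orP[/eqP<-|/eqP<-]; [left|right].
  - by case=> ->; rewrite subrr ?mul0r ?mulr0.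
have phiE : forall z : R[i], phi13 p beta z = 4 * p%:C * (p%:C - 1) / (- (4 * gD p%:C beta%:C z)).
  by move=> z; rewrite /phi13; congr (_ / _); rewrite /gD /gw; field.
have four0 : 4 != 0 :> R[i] by rewrite pnatr_eq0.
have phi0 : forall z : R[i], phi13 p beta z = 0 <-> gD p%:C beta%:C z = 0.
  move=> z; rewrite phiE; split; last by move=> ->; rewrite mulr0 oppr0 invr0 mulr0.
  move/eqP; rewrite mulf_eq0 invr_eq0 oppr_eq0 !mulf_eq0 (negbTE four0) (negbTE P0) /=.
  have -> : (p%:C - 1 == 0) = false by apply/negbTE; rewrite -oppr_eq0 opprB.
  by move=> /eqP.
have EE : forall z, E z <-> gD p%:C beta%:C z = 0.
  move=> z; split; last by move=> h; right; apply/phi0.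
  case=> [eig|/phi0 //].
  have [//|D0] := eqVneq (gD p%:C beta%:C z) 0.
  by move: (not_eig n_gt0 D0 (@entX R p beta k hk l')); rewrite eig.
have Dfac : forall z : R[i], gD p%:C beta%:C z != 0 ->
   (beta%:C + 2 * p%:C + 2 * z != 0) /\ (beta%:C - 2 * p%:C + 2 * z != 0).
  move=> z.
  have -> : gD p%:C beta%:C z = (beta%:C + 2 * p%:C + 2 * z) * (beta%:C - 2 * p%:C + 2 * z) / 4.
    by rewrite /gD /gw; field.
  by move=> Dz; split; apply/eqP => h; move: Dz; rewrite h ?mul0r ?mulr0 ?mul0r eqxx.
have KEY : forall z : R[i], ~ E z -> let P := p%:C in let Bt := beta%:C in
   [/\ P * (1 - P) / ((-(Bt/2) - z)^+2 - P^+2) = 4 * P * (P - 1) / (4 * P ^+ 2 - (Bt + 2 * z) ^+ 2),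
      P * (1 - P) / ((-(Bt/2) - z)^+2 - P^+2) - Bt + z + (1 - P) * (-(Bt/2) - z) / ((-(Bt/2) - z)^+2 - P^+2)
      = - ((Bt ^+ 2 + 2 * Bt * P + Bt * z - 2 * P * z
      - 2 * P - 2 * z ^+ 2 + 2) / (Bt + 2 * P + 2 * z)) &
    - ((Bt ^+ 2 + 2 * Bt * P + Bt * z - 2 * P * z
      - 2 * P - 2 * z ^+ 2 + 2) / (Bt + 2 * P + 2 * z)) /
    (4 * P * (P - 1) / (4 * P ^+ 2 - (Bt + 2 * z) ^+ 2)) =
    (- Bt + 2 * P - 2 * z)
  * (Bt ^+ 2 + 2 * Bt * P + Bt * z - 2 * P * z
     - 2 * P - 2 * z ^+ 2 + 2)
  / (4 * P * (1 - P))].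
  move=> z nE P Bt.
  have D0 : gD p%:C beta%:C z != 0 by apply/eqP => h; apply: nE; apply/EE.
  have [d1 d2] := Dfac z D0.
  apply: (@key_ids _ (beta%:C + 2 * p%:C + 2 * z) (beta%:C - 2 * p%:C + 2 * z)) => //.
  - by rewrite /P; field.
  - by rewrite /P /Bt; field.
  - have -> : beta%:C + 2 * p%:C + 2 * z - (beta%:C - 2 * p%:C + 2 * z) = 4 * p%:C by ring.
    by rewrite mulf_neq0.
  - have -> : 4 - (beta%:C + 2 * p%:C + 2 * z - (beta%:C - 2 * p%:C + 2 * z)) = 4 * (1 - p%:C) by ring.
    by rewrite mulf_neq0.
split; [|split].
- move=> z nE.
  have D0 : gD p%:C beta%:C z != 0 by apply/eqP => h; apply: nE; apply/EE.
  rewrite /schur /H (schur_gen n_gt0 D0 (@entX _ p beta _ hk l') (@entT _ p beta _ hk l') (@entB _ p beta _ hk l')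
     (@entJ _ p beta _ hk l') (@entL _ p _ hk l')).
  have [K1 K2 K3] := KEY z nE.
  by congr (_ *: _ - _%:M).
- by move=> z nE; have [K1 K2 K3] := KEY z nE.
- by move=> z; rewrite EE Dkey.
Qed.
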